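(* Let $\vec{\mathcal G}=([n],E)$ be a directed graph with $m=|E|$ edges in which every vertex has at least one outgoing edge and which has a single strongly connected component. Let the weights $(r_{ij})_{(i,j)\in E}$ be independent absolutely continuous random variables with densities $f_{ij}$ satisfying $f_{ij}(y)\le\phi$ for all $(i,j)$ and $y$, for some $\phi>0$. Let $\delta=1/(2n^2m\phi)$. Then $$\mathbb P\bigl(\exists \text{ a cycle } C:\ B_1(r,\delta)\subseteq\mathcal P^{C}\bigr)\ge 1-\frac1n,$$ where $B_1(r,\delta)=\{\tilde r\in\mathbb R^m:\|r-\tilde r\|_1\le\delta\}$.
   Context: The mean weight of a directed cycle is the sum of its edge weights divided by its number of edges. For a directed cycle $C$, $\mathcal P^{C}$ is the set of $r\in\mathbb R^m$ such that $C$ is the unique cycle of minimum mean weight in $\vec{\mathcal G}$ with weights $r$. *)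

(* Defs.v *)
From HB Require Import structures.
From mathcomp Require Import all_boot all_order all_algebra.
From mathcomp Require Import all_classical all_reals all_analysis.
Set Implicit Arguments. Unset Strict Implicit. Unset Printing Implicit Defensive.
Import Order.TTheory GRing.Theory Num.Theory.
Local Open Scope ring_scope.
Local Open Scope classical_set_scope.

(* Weight vectors r in R^m (m = #|E|)
   are encoded as functions 'I_n * 'I_n -> R, only values on E matter. *)

(* edge set of the closed walk s_0 -> s_1 -> ... -> s_{k-1} -> s_0 *)
Definition cycle_edges (n : nat) (s : seq 'I_n) : {set 'I_n * 'I_n} :=
  [set e in zip s (rot 1 s)].

Definition is_dcycle (n : nat) (E C : {set 'I_n * 'I_n}) : Prop :=
  exists s : seq 'I_n, [/\ s != [::], uniq s, C = cycle_edges s & C \subset E].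

Definition mean_weight (R : realType) (n : nat) (w : 'I_n * 'I_n -> R)
  (C : {set 'I_n * 'I_n}) : R :=
  (\sum_(e in C) w e) / (#|C|%:R).

Definition PC (R : realType) (n : nat) (E C : {set 'I_n * 'I_n})
  : set ('I_n * 'I_n -> R) :=
  [set w | is_dcycle E C /\
     forall C', is_dcycle E C' -> C' <> C -> mean_weight w C < mean_weight w C'].

Definition l1ball (R : realType) (n : nat) (E : {set 'I_n * 'I_n})
  (r : 'I_n * 'I_n -> R) (delta : R) : set ('I_n * 'I_n -> R) :=
  [set r' | \sum_(e in E) `|r e - r' e| <= delta].

Definition mutually_independent (R : realType) (d : measure_display)
  (T : measurableType d) (P : probability T R) (n : nat)
  (E : {set 'I_n * 'I_n}) (X : 'I_n * 'I_n -> {RV P >-> R}) : Prop :=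
  forall (S : {set 'I_n * 'I_n}) (A : 'I_n * 'I_n -> set R),
    S \subset E -> (forall e, e \in S -> measurable (A e)) ->
    P [set t | forall e, e \in S -> A e (X e t)] =
    (\prod_(e in S) P (X e @^-1` A e))%E.

Definition is_density (R : realType) (d : measure_display)
  (T : measurableType d) (P : probability T R) (Y : {RV P >-> R})
  (f : R -> R) : Prop :=
  measurable_fun setT f /\ (forall y, 0 <= f y) /\
  forall A : set R, measurable A ->
    P (Y @^-1` A) = (\int[@lebesgue_measure R]_(y in A) (f y)%:E)%E.

Definition strongly_connected (n : nat) (E : {set 'I_n * 'I_n}) : Prop :=
  forall i j : 'I_n, connect (fun x y => (x, y) \in E) i j.

(* Main.v *)
Require Import Defs.
From HB Require Import structures.
From mathcomp Require Import all_boot all_order all_algebra.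
From mathcomp Require Import all_classical all_reals all_analysis.
From mathcomp Require Import lra ring.
Import Order.TTheory GRing.Theory Num.Theory.
Local Open Scope ring_scope.
Local Open Scope classical_set_scope.
Set Implicit Arguments. Unset Strict Implicit. Unset Printing Implicit Defensive.


Section Det.
Variables (R : realType) (n : nat) (E : {set 'I_n * 'I_n}).
Implicit Types (C : {set 'I_n * 'I_n}) (w : 'I_n * 'I_n -> R).

Lemma cyc_sub C : is_dcycle E C -> C \subset E.
Proof. by case=> s []. Qed.

Lemma cyc_card C : is_dcycle E C -> (0 < #|C|)%N /\ (#|C| <= n)%N.
Proof.
case=> s [s0 us -> _]; split.
  case: s s0 us => // x s _ _; apply/card_gt0P; exists (x, head x (rcons s x)).
  rewrite /cycle_edges inE rot1_cons; case: s => [|y s] //=; rewrite inE eqxx //.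
rewrite /cycle_edges cardsE; apply: leq_trans (card_size _) _.
rewrite size_zip size_rot minnn -(card_uniqP us).
by rewrite -[X in (_ <= X)%N](card_ord n) max_card.
Qed.


Definition upd w (e : 'I_n * 'I_n) (x : R) := fun f => if f == e then x else w f.

Lemma mean_close w w' (h : R) C : is_dcycle E C ->
  (forall f, f \in E -> `|w f - w' f| <= h) ->
  `|mean_weight w C - mean_weight w' C| <= h.
Proof.
move=> cC hw; have [c0 _] := cyc_card cC; have sCE := cyc_sub cC.
have cpos : 0 < #|C|%:R :> R by rewrite ltr0n.
rewrite /mean_weight -mulrBl -sumrB normrM normfV (ger0_norm (ltW cpos)).
rewrite ler_pdivrMr //.
apply: le_trans (ler_norm_sum _ _ _) _.
rewrite -sumr_const mulr_sumr; apply: ler_sum => f fC; rewrite mulr1.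
exact: (hw f (fintype.subsetP sCE f fC)).
Qed.

Lemma cyc_memE C f : is_dcycle E C -> f \in C -> f \in E.
Proof. by move=> cC; apply: (fintype.subsetP (cyc_sub cC)). Qed.

Lemma mean_upd w e x1 x2 C :
  mean_weight (upd w e x2) C - mean_weight (upd w e x1) C =
  if e \in C then (x2 - x1) / #|C|%:R else 0.
Proof.
rewrite /mean_weight -mulrBl -sumrB; case: ifP => eC.
  rewrite (bigD1 e) //= /upd eqxx big1 ?addr0 // => f /andP[_ fe].
  by rewrite (negbTE fe) subrr.
rewrite big1 ?mul0r // => f fC; rewrite /upd; case: eqP => [fe|_].
  by move: fC; rewrite fe eC.
by rewrite subrr.
Qed.



Definition badP (eps : R) e w : Prop :=
 (exists C, [/\ is_dcycle E C, e \in C & forall C', is_dcycle E C' -> e \notin C' ->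
      mean_weight w C <= mean_weight w C' + eps]) /\
 (exists C', [/\ is_dcycle E C', e \notin C' & forall C, is_dcycle E C -> e \in C ->
      mean_weight w C' <= mean_weight w C + eps]).

Lemma bad_mono eps h e w w' : (forall f, f \in E -> `|w f - w' f| <= h) ->
  badP eps e w -> badP (eps + h + h) e w'.
Proof.
move=> hw.
have cl C : is_dcycle E C -> mean_weight w' C <= mean_weight w C + h /\
    mean_weight w C <= mean_weight w' C + h.
  move=> cC; have := mean_close cC hw; rewrite ler_norml => /andP[? ?].
  split; lra.
case=> [[C [cC eC H1]] [C' [cC' eC' H2]]]; split.
  exists C; split => // D cD eD; have := H1 D cD eD.
  have := cl C cC; have := cl D cD; lra.
exists C'; split => // D cD eD; have := H2 D cD eD.
have := cl C' cC'; have := cl D cD; lra.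
Qed.

Lemma bad_interval eps e w x1 x2 : x1 <= x2 ->
  badP eps e (upd w e x1) -> badP eps e (upd w e x2) ->
  x2 - x1 <= 2 * n%:R * eps.
Proof.
move=> x12 [_ [C' [cC' eC' H1]]] [[C [cC eC H2]] _].
have a := H2 C' cC' eC'; have b := H1 C cC eC.
have m' := mean_upd w e x1 x2 C'; rewrite (negbTE eC') in m'.
have m := mean_upd w e x1 x2 C; rewrite eC in m.
have [c0 cn] := cyc_card cC.
have cpos : 0 < #|C|%:R :> R by rewrite ltr0n.
have cle : #|C|%:R <= n%:R :> R by rewrite ler_nat.
set q := (x2 - x1) / #|C|%:R in m.
have hq : q <= 2 * eps by lra.
have q0 : 0 <= q by rewrite /q divr_ge0 // ?subr_ge0 // ltW.
have -> : x2 - x1 = q * #|C|%:R by rewrite /q divfK // gt_eqF.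
nra.
Qed.

Lemma J_sub eps e w :
  let J := [set x | badP eps e (upd w e x)] in
  J `<=` [set y | inf J <= y <= inf J + 2 * n%:R * eps].
Proof.
move=> J x Jx.
have e0 : 0 <= 2 * n%:R * eps by have := bad_interval (lexx x) Jx Jx; rewrite subrr.
have lb : lbound J (x - 2 * n%:R * eps).
  move=> y Jy; case: (leP x y) => xy; first lra.
  have := bad_interval (ltW xy) Jy Jx; lra.
have hl : has_lbound J by exists (x - 2 * n%:R * eps).
have i1 : inf J <= x := ge_inf hl Jx.
have i2 : x - 2 * n%:R * eps <= inf J := lb_le_inf (ex_intro _ x Jx) lb.
rewrite /=; apply/andP; split; lra.
Qed.

Lemma argmin_ex (T : finType) (Pr : T -> Prop) (F : T -> R) :
  (exists x, Pr x) -> exists x, Pr x /\ forall y, Pr y -> F x <= F y.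
Proof.
case=> x0 Px0.
have Pb : [pred x | `[< Pr x >]] x0 by rewrite /= asboolE.
case: (arg_minP F Pb) => x /= /asboolP Px Hx; exists x; split => // y Py.
by apply: Hx; rewrite /= asboolE.
Qed.

Lemma gap_exists (del : R) w : 0 <= del -> (exists C, is_dcycle E C) ->
  (forall e, e \in E -> ~ badP del e w) ->
  exists C, is_dcycle E C /\ forall C', is_dcycle E C' -> C' <> C ->
    mean_weight w C + del < mean_weight w C'.
Proof.
move=> d0 ex nb.
have [C [cC Cmin]] := argmin_ex (fun C => mean_weight w C) ex.
exists C; split => // C' cC' neq.
have [e [eE eCC']] : exists e, e \in E /\ ((e \in C) && (e \notin C') \/ (e \in C') && (e \notin C)).
  have : C != C' by apply/eqP => h; apply: neq.
  rewrite finset.eqEsubset negb_and => /orP[] /(fintype.subsetPn) [e e1 e2].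
    by exists e; split; [exact: cyc_memE cC e1|left; rewrite e1].
  by exists e; split; [exact: cyc_memE cC' e1|right; rewrite e1].
apply: contrapT => /negP; rewrite -leNgt => hlt; apply: (nb e eE).
case: eCC' => /andP[e1 e2].
  split.
    exists C; split => // D cD eD; have := Cmin D cD; lra.
  exists C'; split => // D cD eD; have := Cmin D cD; lra.
split.
  exists C'; split => // D cD eD; have := Cmin D cD; lra.
exists C; split => // D cD eD; have := Cmin D cD; lra.
Qed.


Definition acoef C f : R := (f \in C)%:R / #|C|%:R.

Lemma acoef_bd C f : 0 <= acoef C f <= 1.
Proof.
rewrite /acoef; case: (f \in C); last by rewrite mul0r lexx ler01.
have [c0|cp] := posnP #|C|; first by rewrite c0 invr0 mulr0 lexx ler01.
rewrite mul1r invr_ge0 ler0n /= invr_le1 ?ler1n ?ltr0n //.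
by rewrite unitfE pnatr_eq0 -lt0n.
Qed.

Lemma mean_lin w C : is_dcycle E C ->
  mean_weight w C = \sum_(f in E) w f * acoef C f.
Proof.
move=> cC; rewrite /mean_weight /acoef mulr_suml.
rewrite [RHS](bigID (fun f => f \in C)) /= [X in _ = _ + X]big1 ?addr0; last first.
  by move=> f /andP[_ /negbTE ->]; rewrite mul0r mulr0.
apply: eq_big => [f|f fC]; last by rewrite fC mul1r.
by case fC: (f \in C); rewrite ?andbF ?andbT // (cyc_memE cC fC).
Qed.

Definition Mgood (del : R) w : Prop :=
  exists C, is_dcycle E C /\ forall C', is_dcycle E C' -> C' <> C ->
    forall f, f \in E -> del * `|acoef C' f - acoef C f| <
       mean_weight w C' - mean_weight w C.

Lemma upd_id w f : upd w f (w f) = w.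
Proof. by apply/funext => g; rewrite /upd; case: eqP => // ->. Qed.

Lemma ball_Mgood (del : R) w : 0 <= del ->
  (exists C, l1ball E w del `<=` PC E C) -> Mgood del w.
Proof.
move=> d0 [C HC].
have rin : l1ball E w del w by rewrite /l1ball /= big1 // => f _; rewrite subrr normr0.
have [cC _] := HC _ rin.
exists C; split => // C' cC' neq f fE.
set s := if 0 <= acoef C' f - acoef C f then - del else del.
have inb : l1ball E w del (upd w f (w f + s)).
  rewrite /l1ball /= (bigD1 f) //= big1 ?addr0 /upd ?eqxx.
    rewrite opprD addrA subrr sub0r normrN /s; case: ifP => _;
      by rewrite ?normrN ger0_norm.
  by move=> g /andP[_ /negbTE ->]; rewrite subrr normr0.
have [_ H] := HC _ inb; have := H C' cC' neq.
have m1 := mean_upd w f (w f) (w f + s) C; rewrite upd_id in m1.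
have m2 := mean_upd w f (w f) (w f + s) C'; rewrite upd_id in m2.
have e1 : (if f \in C then (w f + s - w f) / #|C|%:R else 0) = s * acoef C f.
  by rewrite /acoef; case: (f \in C); rewrite ?mul1r ?mul0r ?mulr0 // addrAC subrr add0r.
have e2 : (if f \in C' then (w f + s - w f) / #|C'|%:R else 0) = s * acoef C' f.
  by rewrite /acoef; case: (f \in C'); rewrite ?mul1r ?mul0r ?mulr0 // addrAC subrr add0r.
rewrite e1 in m1; rewrite e2 in m2.
have Hs : s * acoef C' f - s * acoef C f = - (del * `|acoef C' f - acoef C f|).
  rewrite -mulrBr /s; case: ifP => hc.
    by rewrite ger0_norm // mulNr.
  by rewrite ltr0_norm ?ltNge ?hc // mulrN opprK.
move=> hlt; lra.
Qed.


Lemma Mgood_ball (del : R) w : 0 <= del -> Mgood del w ->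
  exists C, l1ball E w del `<=` PC E C.
Proof.
move=> d0 [C [cC H]]; exists C => r' inb; split => // C' cC' neq.
set c := fun f => acoef C' f - acoef C f.
have gap : mean_weight r' C' - mean_weight r' C =
    (mean_weight w C' - mean_weight w C) + \sum_(f in E) (r' f - w f) * c f.
  rewrite !mean_lin // -!sumrB -big_split; apply: eq_bigr => f _; rewrite /c /=; ring.
have [f0 f0C'] : exists f0, f0 \in C'.
  by have [c0 _] := cyc_card cC'; move/card_gt0P: c0 => [f0 ?]; exists f0.
have [g [gE gmax]] := argmin_ex (fun f => - `|c f|) (ex_intro (fun f => f \in E) f0 (cyc_memE cC' f0C')).
have hK := H C' cC' neq g gE.
have bd : `|\sum_(f in E) (r' f - w f) * c f| <= `|c g| * del.
  apply: le_trans (ler_norm_sum _ _ _) _.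
  apply: le_trans (_ : \sum_(f in E) `|c g| * `|w f - r' f| <= _).
    apply: ler_sum => f fE; rewrite normrM distrC mulrC ler_wpM2r //.
    by have := gmax f fE; rewrite lerN2.
  by rewrite -mulr_sumr ler_wpM2l.
move: bd; rewrite ler_norml => /andP[b1 b2].
rewrite -subr_gt0 gap; rewrite /c in hK b1 b2 *; lra.
Qed.


Lemma good_Mgood (del : R) w : 0 <= del -> (exists C, is_dcycle E C) ->
  (forall e, e \in E -> ~ badP del e w) -> Mgood del w.
Proof.
move=> d0 ex nb; have [C [cC H]] := gap_exists d0 ex nb.
exists C; split => // C' cC' neq f fE; have := H C' cC' neq.
have := acoef_bd C f; have := acoef_bd C' f => /andP[a1 a2] /andP[b1 b2].
have : `|acoef C' f - acoef C f| <= 1 by rewrite ler_norml; apply/andP; split; lra.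
move=> hn hl; have : del * `|acoef C' f - acoef C f| <= del by rewrite ler_piMr.
lra.
Qed.

Lemma path_zip_all (r : rel 'I_n) y x p : path r x (rcons p y) ->
  all (fun q => r q.1 q.2) (zip (x :: p) (rcons p y)).
Proof.
elim: p x => [|z p IH] x /=; first by rewrite andbT.
by move=> /andP[-> /IH].
Qed.

Lemma cycle_exists : (exists i j, (i, j) \in E) -> strongly_connected E ->
  exists C, is_dcycle E C.
Proof.
move=> [i [j ijE]] sc.
have := sc j i; move/connectP => [p pth ilast].
case: (shortenP pth) ilast => p' pth' uq _ ilast.
exists (cycle_edges (j :: p')); exists (j :: p'); split => //.
apply/fintype.subsetP => q; rewrite /cycle_edges inE rot1_cons.
have : path (fun x y => (x, y) \in E) j (rcons p' j) by rewrite rcons_path pth' -ilast ijE.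
move/path_zip_all/allP => H /H /=; by case: q.
Qed.

End Det.


Section Meas.
Variables (R : realType) (d : measure_display) (T : measurableType d).

Lemma meas_bigsum (I : Type) (s : seq I) (Pr : pred I) (h : I -> T -> R) :
  (forall i, measurable_fun setT (h i)) ->
  measurable_fun setT (fun t => \sum_(i <- s | Pr i) h i t).
Proof.
move=> mh; elim: s => [|i s IH].
  by under eq_fun do rewrite big_nil; exact: measurable_cst.
under eq_fun do rewrite big_cons.
case: (Pr i); last exact: IH.
exact: measurable_realfun.measurable_funD.
Qed.

Lemma meas_pre (g : T -> R) (B : set R) : measurable_fun setT g ->
  measurable B -> measurable (g @^-1` B).
Proof. by move=> mg mB; have := mg measurableT B mB; rewrite setTI. Qed.

Lemma meas_lt (g : T -> R) (a : R) : measurable_fun setT g ->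
  measurable [set t | a < g t].
Proof.
move=> mg; have -> : [set t | a < g t] = g @^-1` `]a, +oo[%classic.
  by apply/seteqP; split => t /=; rewrite in_itv /= andbT.
by apply: meas_pre => //; exact: measurable_itv.
Qed.

Lemma meas_le (g : T -> R) (a : R) : measurable_fun setT g ->
  measurable [set t | g t <= a].
Proof.
move=> mg; have -> : [set t | g t <= a] = g @^-1` `]-oo, a]%classic.
  by apply/seteqP; split => t /=; rewrite in_itv /=.
by apply: meas_pre => //; exact: measurable_itv.
Qed.

Variables (n : nat) (E : {set 'I_n * 'I_n}) (X : 'I_n * 'I_n -> T -> R).
Hypothesis mX : forall e, measurable_fun setT (X e).

Lemma meas_mean C : measurable_fun setT (fun t => mean_weight (fun e => X e t) C).
Proof.
rewrite /mean_weight.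
apply: (measurable_realfun.measurable_funM (g := cst (#|C|%:R^-1))).
  exact: meas_bigsum.
exact: measurable_cst.
Qed.

Lemma meas_Mgood (del : R) : measurable [set t | Mgood E del (fun e => X e t)].
Proof.
have -> : [set t | Mgood E del (fun e => X e t)] =
  \bigcup_(C in [set C | is_dcycle E C])
   \bigcap_(C' in [set C' | is_dcycle E C' /\ C' <> C])
    \bigcap_(f in [set f | f \in E])
     [set t | del * `|@acoef R n C' f - @acoef R n C f| <
        mean_weight (fun e => X e t) C' - mean_weight (fun e => X e t) C].
  apply/seteqP; split => t /=.
    by move=> [C [cC H]]; exists C => // C' [cC' neq] f fE; apply: H.
  by move=> [C cC H]; exists C; split => // C' cC' neq f fE; apply: (H C').
apply: fin_bigcup_measurable => [|C _]; first exact: finite_finset.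
apply: fin_bigcap_measurable => [|C' _]; first exact: finite_finset.
apply: fin_bigcap_measurable => [|f _]; first exact: finite_finset.
by apply: meas_lt; apply: measurable_realfun.measurable_funB; exact: meas_mean.
Qed.

Lemma meas_bad (eps : R) e : measurable [set t | badP E eps e (fun f => X f t)].
Proof.
have -> : [set t | badP E eps e (fun f => X f t)] =
  (\bigcup_(C in [set C | is_dcycle E C /\ e \in C])
   \bigcap_(C' in [set C' | is_dcycle E C' /\ e \notin C'])
     [set t | mean_weight (fun e => X e t) C - mean_weight (fun e => X e t) C' <= eps])
  `&`
  (\bigcup_(C' in [set C' | is_dcycle E C' /\ e \notin C'])
   \bigcap_(C in [set C | is_dcycle E C /\ e \in C])
     [set t | mean_weight (fun e => X e t) C' - mean_weight (fun e => X e t) C <= eps]).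
  apply/seteqP; split => t /=.
    move=> [[C [cC eC H1]] [C' [cC' eC' H2]]]; split.
      by exists C => // D [cD eD] /=; have := H1 D cD eD; lra.
    by exists C' => // D [cD eD] /=; have := H2 D cD eD; lra.
  move=> [[C [cC eC] H1] [C' [cC' eC'] H2]]; split.
    by exists C; split => // D cD eD; have := H1 D (conj cD eD); rewrite /=; lra.
  by exists C'; split => // D cD eD; have := H2 D (conj cD eD); rewrite /=; lra.
apply: measurableI.
  apply: fin_bigcup_measurable => [|C _]; first exact: finite_finset.
  apply: fin_bigcap_measurable => [|C' _]; first exact: finite_finset.
  by apply: meas_le; apply: measurable_realfun.measurable_funB; exact: meas_mean.
apply: fin_bigcup_measurable => [|C _]; first exact: finite_finset.
apply: fin_bigcap_measurable => [|C' _]; first exact: finite_finset.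
by apply: meas_le; apply: measurable_realfun.measurable_funB; exact: meas_mean.
Qed.

End Meas.


Section Prob.
Variables (R : realType) (d : measure_display) (T : measurableType d)
  (P : probability T R) (n : nat) (E : {set 'I_n * 'I_n})
  (X : 'I_n * 'I_n -> {RV P >-> R}) (f : 'I_n * 'I_n -> R -> R) (phi : R).
Hypothesis dens : forall e, e \in E -> is_density (X e) (f e).
Hypothesis fphi : forall e, e \in E -> forall y, f e y <= phi.

Lemma itv_set (a b : R) : [set y | a <= y <= b] = `[a, b]%classic.
Proof. by apply/seteqP; split => y /=; rewrite in_itv. Qed.

Lemma dens_bound e (a b : R) : e \in E -> a <= b ->
  (P (X e @^-1` [set y : R | (a <= y <= b)%R]) <= (phi * (b - a))%:E)%E.
Proof.
move=> eE ab; have [mf [f0 hA]] := dens eE.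
rewrite itv_set hA; last exact: measurable_itv.
apply: (@le_trans _ _ (\int[lebesgue_measure]_(y in `[a, b]%classic) (cst phi%:E y))%E).
  apply: (ge0_le_integral lebesgue_measure (measurable_itv _)).
  - by move=> y _; rewrite lee_fin.
  - apply/measurable_realfun.measurable_EFinP; apply: measurable_funS mf => //; exact: measurable_itv.
  - exact: measurable_cst.
  - by move=> y _; rewrite lee_fin /=; apply: fphi.
rewrite integral_cst; last exact: measurable_itv.
have := lebesgue_measure_itv `[a, b]%R; rewrite /= => ->.
case: ifP => _; last by rewrite mule0 lee_fin mulr_ge0 ?subr_ge0 // (le_trans (f0 a)) // fphi.
by rewrite -EFinD -EFinM.
Qed.


Hypothesis indep : mutually_independent E X.

Lemma itv_set_co (a b : R) : [set y | a <= y < b] = `[a, b[%classic.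
Proof. by apply/seteqP; split => y /=; rewrite in_itv. Qed.

Section Box.
Variables (e : 'I_n * 'I_n) (h : R).
Hypothesis eE : e \in E.
Hypothesis h0 : 0 < h.

Definition Ep := E :\ e.

Definition box (k : {ffun 'I_n * 'I_n -> int}) : set T :=
  [set t | (forall g, g \notin Ep -> k g = 0) /\
     forall g, g \in Ep -> (k g)%:~R * h <= X g t < (k g + 1)%:~R * h].

Definition Abox (k : {ffun 'I_n * 'I_n -> int}) g : set R :=
  [set y | (k g)%:~R * h <= y < (k g + 1)%:~R * h].

Lemma Abox_meas k g : measurable (Abox k g).
Proof. by rewrite /Abox itv_set_co; exact: measurable_itv. Qed.

Lemma box_meas k : measurable (box k).
Proof.
case: (pselect (forall g, g \notin Ep -> k g = 0)) => c0; last first.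
  have -> : box k = set0 by apply/seteqP; split => t // [].
  exact: measurable0.
have -> : box k = \bigcap_(g in [set g | g \in Ep]) (X g @^-1` Abox k g).
  by apply/seteqP; split => t /=; [case=> _ H g /H|move=> H; split].
apply: fin_bigcap_measurable => [|g _]; first exact: finite_finset.
apply: measurable_funPTI; exact: Abox_meas.
Qed.

Lemma box_indep k (I : set R) : measurable I ->
  P (box k `&` X e @^-1` I) = (P (box k) * P (X e @^-1` I))%E.
Proof.
move=> mI.
case: (pselect (forall g, g \notin Ep -> k g = 0)) => c0; last first.
  have -> : box k = set0 by apply/seteqP; split => t // [].
  by rewrite set0I measure0 mul0e.
set A := fun g => if g == e then I else Abox k g.
have sE : Ep \subset E by rewrite /Ep subD1set.
have e1 : box k `&` X e @^-1` I = [set t | forall g, g \in E -> A g (X g t)].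
  apply/seteqP; split => t /=.
    move=> [[_ H] He] g gE; rewrite /A; case: eqP => [->//|/eqP ge].
    by apply: H; rewrite /Ep !inE ge.
  move=> H; split; last by have := H e eE; rewrite /A eqxx.
  split => // g; rewrite /Ep !inE => /andP[ge gE]; have := H g gE.
  by rewrite /A (negbTE ge).
have e2 : box k = [set t | forall g, g \in Ep -> A g (X g t)].
  apply/seteqP; split => t /=.
    move=> [_ H] g gEp; rewrite /A; move: (gEp); rewrite /Ep !inE => /andP[/negbTE -> _].
    exact: H.
  move=> H; split => // g gEp; have := H g gEp; rewrite /A.
  by move: (gEp); rewrite /Ep !inE => /andP[/negbTE -> _].
have mA g : g \in E -> measurable (A g).
  by move=> _; rewrite /A; case: eqP => _ //; exact: Abox_meas.
rewrite e1 e2 (indep (subxx _) (fun g gE => mA g gE)).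
rewrite (indep sE (fun g gEp => mA g (fintype.subsetP sE g gEp))).
rewrite (bigD1 e) //= muleC /A eqxx; congr (_ * _)%E.
by apply: eq_bigl => g; rewrite /Ep !inE andbC.
Qed.


Variable del : R.

Definition corner (k : {ffun 'I_n * 'I_n -> int}) : 'I_n * 'I_n -> R :=
  fun g => (k g)%:~R * h.
Definition Jk k := [set x | badP E (del + h + h) e (upd (corner k) e x)].
Definition Ik k := [set y : R | inf (Jk k) <= y <= inf (Jk k) + 2 * n%:R * (del + h + h)].

Lemma bad_box k : [set t | badP E del e (fun g => X g t)] `&` box k `<=`
  box k `&` X e @^-1` Ik k.
Proof.
move=> t [bt bk]; split => //.
apply: (@J_sub R n E (del + h + h) e (corner k)); rewrite /=.
apply: (bad_mono _ bt) => g gE; rewrite /upd; case: eqP => [->|/eqP ge].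
  by rewrite subrr normr0 ltW.
have gEp : g \in Ep by rewrite /Ep !inE ge.
case: bk => _ /(_ g gEp) /andP[l1 l2].
rewrite /corner ler_norml; apply/andP; split.
  rewrite intrD mulrDl mul1r in l2; lra.
lra.
Qed.

Definition gbox (i : nat) : set T :=
  if pickle_inv i is Some k then box k else set0.

Lemma gbox_meas i : measurable (gbox i).
Proof. by rewrite /gbox; case: pickle_inv => [k|]; [exact: box_meas|exact: measurable0]. Qed.

Lemma box_uniq k k' t : box k t -> box k' t -> k = k'.
Proof.
move=> [z1 b1] [z2 b2]; apply/ffunP => g.
case gEp : (g \in Ep); last by rewrite z1 ?z2 ?gEp.
have /andP[a1 a2] := b1 g gEp; have /andP[c1 c2] := b2 g gEp.
have u1 : (k g)%:~R < (k' g + 1)%:~R :> R.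
  by rewrite -(ltr_pM2r h0); apply: le_lt_trans a1 c2.
have u2 : (k' g)%:~R < (k g + 1)%:~R :> R.
  by rewrite -(ltr_pM2r h0); apply: le_lt_trans c1 a2.
rewrite ltr_int ltzD1 in u1; rewrite ltr_int ltzD1 in u2.
by apply/eqP; rewrite eq_le u1 u2.
Qed.

Lemma gbox_triv : trivIset setT gbox.
Proof.
move=> i j _ _ [t []]; rewrite /gbox.
case ei: (pickle_inv i) => [k|] //; case ej: (pickle_inv j) => [k'|] // bk bk'.
have kk := box_uniq bk bk'; subst k'.
have := @pickle_invK {ffun 'I_n * 'I_n -> int} i; rewrite ei /= => <-.
by have := @pickle_invK {ffun 'I_n * 'I_n -> int} j; rewrite ej /= => <-.
Qed.

Lemma gbox_cover : \bigcup_(i in setT) gbox i = setT.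
Proof.
apply/seteqP; split => // t _.
pose k := [ffun g => if g \in Ep then Num.floor (X g t / h) else 0].
exists (pickle k) => //; rewrite /gbox pickleK_inv; split.
  by move=> g /negbTE gEp; rewrite ffunE gEp.
move=> g gEp; rewrite ffunE gEp.
have /andP[f1 f2] := floor_itv (X g t / h).
by rewrite -ler_pdivlMr // -ltr_pdivrMr // f1 f2.
Qed.


Hypothesis d0 : 0 <= del.

Lemma bad_bound_h :
  (P [set t | badP E del e (fun g => X g t)] <=
     (phi * (2 * n%:R * (del + h + h)))%:E)%E.
Proof.
have dh : 0 <= del + h + h by rewrite -addrA addr_ge0 // addr_ge0 // ltW.
set B := [set t | badP E del e (fun g => X g t)].
set c := phi * (2 * n%:R * (del + h + h)).
have mX g : measurable_fun setT (X g) := measurable_funPT (X g).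
have mB : measurable B := meas_bad E mX del e.
have phi0 : 0 <= phi by apply: le_trans (fphi eE 0); have [_ [f0 _]] := dens eE; exact: f0.
have c0 : 0 <= c by rewrite /c mulr_ge0 // mulr_ge0 // mulr_ge0 // ler0n.
have eq : B = \bigcup_(i in setT) (B `&` gbox i) by rewrite -setI_bigcupr gbox_cover setIT.
rewrite eq measure_bigcup //; last first.
  by apply: trivIset_setIl; exact: gbox_triv.
  by move=> i _; apply: measurableI => //; exact: gbox_meas.
apply: (@le_trans _ _ (\sum_(i <oo | i \in setT) (c%:E * P (gbox i)))%E).
  apply: lee_nneseries => [i _ _|i _]; first exact: measure_ge0.
  rewrite /gbox; case: pickle_inv => [k|]; last by rewrite setI0 measure0 mule_ge0.
  have mI : measurable (Ik k) by rewrite /Ik itv_set; exact: measurable_itv.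
  apply: (@le_trans _ _ (P (box k `&` X e @^-1` Ik k))).
    apply: le_measure; last exact: bad_box.
      by rewrite inE; apply: measurableI => //; exact: box_meas.
    by rewrite inE; apply: measurableI; [exact: box_meas|exact: measurable_funPTI].
  rewrite box_indep // muleC; apply: lee_wpmul2r; first exact: measure_ge0.
  have wge : inf (Jk k) <= inf (Jk k) + 2 * n%:R * (del + h + h).
    by rewrite lerDl mulr_ge0 // mulr_ge0 // ler0n.
  have := dens_bound eE wge; rewrite /Ik.
  by rewrite (addrC (inf _)) addrK.
rewrite nneseriesZl; last by move=> i _; exact: measure_ge0.
rewrite -measure_bigcup; last exact: gbox_triv.
  rewrite gbox_cover -[X in (_ <= X)%E]mule1; apply: lee_wpmul2l; first by rewrite lee_fin.
  exact: probability_le1.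
by move=> i _; exact: gbox_meas.
Qed.

End Box.


Lemma bad_bound e (del : R) : e \in E -> 0 <= del -> (0 < n)%N -> 0 < phi ->
  (P [set t | badP E del e (fun g => X g t)] <= (phi * (2 * n%:R * del))%:E)%E.
Proof.
move=> eE d0 n0 phi0.
set B := [set t | badP E del e (fun g => X g t)].
have mX g : measurable_fun setT (X g) := measurable_funPT (X g).
have mB : measurable B := meas_bad E mX del e.
have fin : P B \is a fin_num.
  rewrite ge0_fin_numE ?measure_ge0 //; apply: le_lt_trans (probability_le1 P mB) _.
  exact: ltey.
rewrite -(fineK fin) lee_fin; apply/ler_addgt0Pr => eps eps0.
have np : 0 < n%:R :> R by rewrite ltr0n.
set h := eps / (4 * n%:R * phi).
have h0 : 0 < h by rewrite /h divr_gt0 // mulr_gt0 // mulr_gt0.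
have := bad_bound_h eE h0 d0; rewrite -/B -(fineK fin) lee_fin => H.
apply: (le_trans H); rewrite le_eqVlt; apply/orP; left; apply/eqP.
rewrite /h; field; rewrite ?gt_eqF //.
Qed.

End Prob.

Unset Implicit Arguments.

Lemma union_bound (R : realType) (d : measure_display) (T : measurableType d)
  (P : probability T R) (I : Type) (s : seq I) (F : I -> set T) :
  (forall i, measurable (F i)) ->
  (P (\big[setU/set0]_(i <- s) F i) <= \sum_(i <- s) P (F i))%E.
Proof.
move=> mF; elim: s => [|i s IH]; first by rewrite !big_nil measure0.
rewrite !big_cons; apply: le_trans (measureU2 _ _ _) _ => //.
  by apply: bigsetU_measurable => j _.
exact: leeD.
Qed.

Lemma mem_bigsetU (T : Type) (I : eqType) (s : seq I) (F : I -> set T) (t : T) (i : I) :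
  i \in s -> F i t -> (\big[setU/set0]_(j <- s) F j) t.
Proof.
elim: s => [//|j s IH]; rewrite inE => /orP[/eqP ->|ins] Ft; rewrite big_cons; first by left.
by right; apply: IH.
Qed.

Theorem mainTheorem4 (R : realType) (d : measure_display) (T : measurableType d)
  (P : probability T R) (n : nat) (E : {set 'I_n * 'I_n})
  (X : 'I_n * 'I_n -> {RV P >-> R}) (f : 'I_n * 'I_n -> R -> R) (phi : R) :
  (0 < n)%N ->
  (forall i : 'I_n, exists j : 'I_n, (i, j) \in E) ->
  strongly_connected E ->
  mutually_independent E X ->
  (forall e, e \in E -> is_density (X e) (f e)) ->
  0 < phi ->
  (forall e, e \in E -> forall y, f e y <= phi) ->
  let delta := ((2 * n ^ 2 * #|E|)%:R * phi)^-1 in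
  ((1 - n%:R^-1)%:E <=
   P [set t | exists C : {set 'I_n * 'I_n},
        l1ball E (fun e => X e t) delta `<=` @PC R n E C])%E.
Proof.
move=> n0 hout sc indep dens phi0 fphi /=.
set delta := ((2 * n ^ 2 * #|E|)%:R * phi)^-1.
have [j0 e0E] := hout (Ordinal n0).
have Ep : (0 < #|E|)%N by apply/card_gt0P; exists (Ordinal n0, j0).
have npos : (0 < 2 * n ^ 2 * #|E|)%N.
  by rewrite !muln_gt0 Ep andbT n0.
have dpos : 0 < delta by rewrite /delta invr_gt0 mulr_gt0 // ltr0n.
have d0 := ltW dpos.
have mX g : measurable_fun setT (X g) := measurable_funPT (X g).
have excyc : exists C, is_dcycle E C.
  by apply: cycle_exists => //; exists (Ordinal n0), j0.
set S := [set t | exists C, _].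
have SE : S = [set t | Mgood E delta (fun e => X e t)].
  apply/seteqP; split => t /=; first exact: ball_Mgood.
  exact: Mgood_ball.
have mS : measurable S by rewrite SE; exact: meas_Mgood.
set B := fun e => [set t | badP E delta e (fun g => X g t)].
have mB e : measurable (B e) := meas_bad E mX delta e.
have SC : ~` S `<=` \big[setU/set0]_(e <- enum E) B e.
  move=> t nS; apply: contrapT => nb; apply: nS; rewrite SE /=.
  apply: good_Mgood => // e eE Be; apply: nb.
  by apply: (@mem_bigsetU _ _ _ _ _ e) => //; rewrite mem_enum.
have c_eq : #|E|%:R * (phi * (2 * n%:R * delta)) = n%:R^-1 :> R.
  rewrite /delta natrM natrM natrX.
  have nn : n%:R != 0 :> R by rewrite pnatr_eq0 -lt0n.
  have en : #|E|%:R != 0 :> R by rewrite pnatr_eq0 -lt0n.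
  field; apply/and3P; split => //; exact: lt0r_neq0.
have ub : (P (~` S) <= (n%:R^-1)%:E)%E.
  have m1 : ~` S \in measurable by rewrite inE; apply: measurableC.
  have m2 : \big[setU/set0]_(e <- enum E) B e \in measurable.
    by rewrite inE; apply: bigsetU_measurable => e _.
  have H1 : (P (~` S) <= P (\big[setU/set0]_(e <- enum E) B e))%E.
    apply: le_measure; last exact: SC.
      by rewrite inE; apply: measurableC.
    by rewrite inE; apply: bigsetU_measurable => e _.
  apply: (le_trans H1).
  have H2 := @union_bound R d T P _ (enum E) B mB.
  apply: (le_trans H2).
  rewrite big_enum /=.
  apply: (@le_trans _ _ (\sum_(e in E) (phi * (2 * n%:R * delta))%:E)%E).
    apply: lee_sum => e eE; exact: (bad_bound dens fphi indep eE d0 n0 phi0).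
  have -> : (\sum_(e in E) (phi * (2 * n%:R * delta))%:E)%R = ((\sum_(e in E) (phi * (2 * n%:R * delta)))%:E) by exact/esym/raddf_sum.
  by rewrite sumr_const -(mulr_natl (phi * (2 * n%:R * delta)) #|E|) c_eq.
have finS : P S \is a fin_num.
  rewrite ge0_fin_numE ?measure_ge0 //; apply: le_lt_trans (probability_le1 P mS) _.
  exact: ltey.
rewrite (probability_setC P mS) -(fineK finS) in ub; rewrite -(fineK finS).
rewrite lee_fin; rewrite -EFinB lee_fin in ub; lra.
Qed.
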